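(* Let $G$ be a group, $k$ a commutative ring and $R=\bigoplus_{\rho\in G}R_\rho$ a $G$-graded $k$-algebra; for $t\in R$ let $t_\rho$ denote its homogeneous component of degree $\rho$. Let $\mathcal C=R\otimes_k kG$ be the $R$-coring with bimodule structure $r(s\otimes\sigma)t=\sum_{\rho\in G}rst_\rho\otimes\sigma\rho$, comultiplication $\Delta(s\otimes\sigma)=(s\otimes\sigma)\otimes_R(1\otimes\sigma)$ and counit $\varepsilon(s\otimes\sigma)=s$. Identify ${}^*\mathcal C={}_R\mathrm{Hom}(\mathcal C,R)$ with the ring $\mathrm{Map}(G,R)$ of all functions $G\to R$ with multiplication $(f\#g)(\tau)=\sum_{\rho\in G}f(\tau)_\rho\,g(\tau\rho)$, and for $\sigma\in G$ let $v_\sigma\in\mathrm{Map}(G,R)$ be given by $v_\sigma(\tau)=\delta_{\sigma,\tau}$. Then for every right $\mathrm{Map}(G,R)$-module $M$, $$\mathrm{Rat}^{\mathcal C}(M)=\bigoplus_{\sigma\in G}M\cdot v_\sigma,$$ where the sum is direct, and this is a $G$-graded right $R$-module with $(M\cdot v_\sigma)R_\rho\subseteq M\cdot v_{\sigma\rho}$ (with $R$ acting through the embedding $r\mapsto(\sigma\mapsto r)$ of $R$ into $\mathrm{Map}(G,R)$). In particular $\mathrm{Rat}^{\mathcal C}$ is exact.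
   Context: For a ring $R$ and an $R$-coring $\mathcal C$ (an $R$-bimodule with coassociative counital bimodule maps $\Delta:\mathcal C\to\mathcal C\otimes_R\mathcal C$, $\varepsilon:\mathcal C\to R$, $\Delta(c)=c_{(1)}\otimes c_{(2)}$), ${}^*\mathcal C={}_R\mathrm{Hom}(\mathcal C,R)$ is a ring with product $(f\#g)(c)=g(c_{(1)}f(c_{(2)}))$. For a right ${}^*\mathcal C$-module $M$, $\mathrm{Rat}^{\mathcal C}(M)$ is the set of $m\in M$ for which there is $\sum_i m_i\otimes c_i\in M\otimes_R\mathcal C$ with $m\cdot f=\sum_i m_if(c_i)$ for all $f\in{}^*\mathcal C$. The identification ${}^*\mathcal C\cong\mathrm{Map}(G,R)$ sends $\varphi$ to $\sigma\mapsto\varphi(1\otimes\sigma)$. *)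

(* Defs.v *)
From HB Require Import structures.
From mathcomp Require Import all_boot all_order all_algebra.
Set Implicit Arguments. Unset Strict Implicit. Unset Printing Implicit Defensive.
Import GRing.Theory.
Local Open Scope ring_scope.

Section Defs.
Variables (G : groupType) (k : comPzRingType) (R : algType k).

(* A G-grading R = (+)_{rho in G} R_rho of the k-algebra R, given through the
   homogeneous-component maps  comp rho t = t_rho  (so R_rho = {t | t_rho = t})
   and a duplicate-free finite list  supp t  containing every rho with t_rho <> 0. *)
Definition is_grading (comp : G -> R -> R) (supp : R -> seq G) : Prop :=
  [/\ (forall rho x y, comp rho (x + y) = comp rho x + comp rho y),
      (forall rho (a : k) x, comp rho (a *: x) = a *: comp rho x),
      (forall rho sigma t, comp rho (comp sigma t) = if rho == sigma then comp sigma t else 0),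
      (forall t, [/\ uniq (supp t),
                     (forall rho, comp rho t != 0 -> rho \in supp t) &
                     t = \sum_(rho <- supp t) comp rho t]) &
      (forall rho sigma x y, comp rho x = x -> comp sigma y = y ->
                             comp (rho * sigma)%g (x * y) = x * y)].

Definition mapmul (comp : G -> R -> R) (supp : R -> seq G) (f g : G -> R) : G -> R :=
  fun tau => \sum_(rho <- supp (f tau)) comp rho (f tau) * g (tau * rho)%g.

Definition mapadd (f g : G -> R) : G -> R := fun tau => f tau + g tau.
Definition mapone : G -> R := fun _ => 1.

Definition embR (r : R) : G -> R := fun _ => r.

Definition vdelta (sigma : G) : G -> R := fun tau => if sigma == tau then 1 else 0.

Definition is_rmodule (comp : G -> R -> R) (supp : R -> seq G)
  (M : zmodType) (act : M -> (G -> R) -> M) : Prop :=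
  [/\ (forall m f g, act m (mapadd f g) = act m f + act m g),
      (forall m n f, act (m + n) f = act m f + act n f),
      (forall m f g, act (act m f) g = act m (mapmul comp supp f g)) &
      (forall m, act m mapone = m)].

Definition is_rmod_morph (M N : zmodType) (actM : M -> (G -> R) -> M)
  (actN : N -> (G -> R) -> N) (h : M -> N) : Prop :=
  (forall x y, h (x + y) = h x + h y) /\ (forall m f, h (actM m f) = actN (h m) f).

(* Rat^C(M): m such that there is  sum_i m_i (x) c_i  in  M (x)_R C  with
   m.f = sum_i m_i f(c_i) for all f in *C = Map(G,R).  Every element of
   M (x)_R (R (x)_k kG) is a finite sum of simple tensors m_i (x) (s_i (x) sigma_i),
   represented by the list of triples (m_i, s_i, sigma_i); and f(s (x) sigma) = s f(sigma)
   (left R-linearity of f), acting on M through the embedding of R. *)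
Definition RatC (M : zmodType) (act : M -> (G -> R) -> M) (m : M) : Prop :=
  exists s : seq (M * R * G),
    forall f : G -> R,
      act m f = \sum_(x <- s) act x.1.1 (embR (x.1.2 * f x.2)).

End Defs.

(* Main.v *)
Require Import Defs.
From HB Require Import structures.
From mathcomp Require Import all_boot all_order all_algebra.
From Stdlib Require Import FunctionalExtensionality.
Import GRing.Theory.
Local Open Scope ring_scope.
Set Implicit Arguments. Unset Strict Implicit.

Lemma sum_pred1 (T : eqType) (V : zmodType) (s : seq T) (a : T) (F : T -> V) :
  uniq s -> \sum_(x <- s) (if x == a then F x else 0) = if a \in s then F a else 0.
Proof.
elim: s => [|b s IH] /=; first by rewrite big_nil.
case/andP=> bs us; rewrite big_cons in_cons IH // eq_sym.
case: eqP => [->|_]; last by rewrite add0r.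
by rewrite (negbTE bs) addr0.
Qed.

Section S.
Variables (G : groupType) (k : comPzRingType) (R : algType k).
Variables (comp : G -> R -> R) (supp : R -> seq G).
Hypothesis gr : is_grading comp supp.

Lemma comp0 rho : comp rho 0 = 0.
Proof.
case: gr => Ha _ _ _ _; have h := Ha rho 0 0; rewrite addr0 in h.
by apply: (addrI (comp rho 0)); rewrite addr0 -h.
Qed.

Lemma comp_sum rho (s : seq G) (F : G -> R) :
  comp rho (\sum_(x <- s) F x) = \sum_(x <- s) comp rho (F x).
Proof.
case: gr => Ha _ _ _ _.
elim: s => [|b s IH]; first by rewrite !big_nil comp0.
by rewrite !big_cons Ha IH.
Qed.

Lemma homogE t a : comp a t = t -> forall rho, comp rho t = if rho == a then t else 0.
Proof.
case: gr => _ _ Hc _ _ => ht rho.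
by rewrite -ht Hc ht.
Qed.

Lemma homog_mul t a (h : G -> R) : comp a t = t ->
  \sum_(rho <- supp t) comp rho t * h rho = t * h a.
Proof.
move=> ht; have hE := homogE ht.
case: gr => _ _ _ Hd _; case: (Hd t) => us insupp _.
under eq_bigr => rho _ do rewrite hE (fun_if (fun x => x * h rho)) mul0r.
rewrite sum_pred1 //; case: ifP => // /negbT nin.
have : comp a t == 0 by apply: contraNT nin; exact: insupp.
by rewrite ht => /eqP ->; rewrite mul0r.
Qed.

Lemma eqg_mulr (sg rho : G) : (sg == (sg * rho)%g) = (rho == 1%g).
Proof. by rewrite -{1}[sg]mulg1 (inj_eq (mulgI sg)) eq_sym. Qed.

Lemma unit_deg : comp 1%g 1 = 1.
Proof.
set e := comp 1%g 1.
case: gr => Ha _ Hc Hd Hm.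
case: (Hd 1) => u1 in1 d1.
have Ee : e = 0 \/ 1%g \in supp 1.
  case: (boolP (1%g \in supp 1)) => h; [by right | left].
  by apply/eqP; apply: contraNT h; exact: in1.
have hom : forall x sg, comp sg x = x -> x * e = x.
  move=> x sg hx.
  have : comp sg (x * 1) = x by rewrite mulr1.
  rewrite {1}d1 mulr_sumr comp_sum.
  have Hy : forall rho, comp (sg * rho)%g (x * comp rho 1) = x * comp rho 1.
    by move=> rho; apply: Hm => //; rewrite Hc eqxx.
  under eq_bigr => rho _ do rewrite (homogE (Hy rho)) eqg_mulr.
  rewrite sum_pred1 //; case: Ee => [e0|i1]; rewrite ?i1 ?e0 => h //.
  by rewrite mulr0 -h -/e e0 mulr0; case: ifP.
have all : forall x, x * e = x.
  move=> x; case: (Hd x) => _ _ dx; rewrite dx mulr_suml.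
  by apply: eq_bigr => rho _; apply: (hom _ rho); rewrite Hc eqxx.
by rewrite -(all 1) mul1r.
Qed.

Lemma comp1 rho : comp rho 1 = if rho == 1%g then 1 else 0.
Proof. exact: homogE unit_deg rho. Qed.

Lemma mapmul_v sg (g : G -> R) :
  mapmul comp supp (vdelta R sg) g = fun tau => if sg == tau then g tau else 0.
Proof.
apply: functional_extensionality => tau; rewrite /mapmul /vdelta.
case: eqP => [<-|_].
  by rewrite (homog_mul _ unit_deg) mul1r mulg1.
by rewrite (homog_mul _ (comp0 1%g)) mul0r.
Qed.

Section Mod.
Variables (M : zmodType) (act : M -> (G -> R) -> M).
Hypothesis hm : is_rmodule comp supp act.

Lemma act0m f : act 0 f = 0.
Proof.
case: hm => _ H2 _ _; have h := H2 0 0 f; rewrite addr0 in h.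
by apply: (addrI (act 0 f)); rewrite addr0 -h.
Qed.

Lemma actm0 m : act m (fun _ => 0) = 0.
Proof.
case: hm => H1 _ _ _; have h := H1 m (fun _ => 0) (fun _ => 0).
have e : mapadd (fun _ : G => (0:R)) (fun _ => 0) = (fun _ => 0).
  by apply: functional_extensionality => t; rewrite /mapadd addr0.
rewrite e in h.
by apply: (addrI (act m (fun _ => 0))); rewrite addr0 -h.
Qed.

Lemma act_sum_m (I : Type) (s : seq I) (F : I -> M) f :
  act (\sum_(i <- s) F i) f = \sum_(i <- s) act (F i) f.
Proof.
case: hm => _ H2 _ _.
elim: s => [|b s IH]; first by rewrite !big_nil act0m.
by rewrite !big_cons H2 IH.
Qed.

Lemma act_sum_f (I : Type) (s : seq I) (F : I -> G -> R) m :
  act m (fun t => \sum_(i <- s) F i t) = \sum_(i <- s) act m (F i).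
Proof.
case: hm => H1 _ _ _.
elim: s => [|b s IH].
  rewrite big_nil -(actm0 m); congr act.
  by apply: functional_extensionality => t; rewrite big_nil.
rewrite big_cons -IH -H1; congr act.
by apply: functional_extensionality => t; rewrite big_cons.
Qed.

Lemma RatC_v x sg : RatC act (act x (vdelta R sg)).
Proof.
case: hm => _ _ H3 _.
exists [:: (act x (vdelta R sg), 1, sg)] => f; rewrite big_seq1 /= !H3 !mapmul_v.
congr act; apply: functional_extensionality => t.
by case: eqP => // <-; rewrite /embR mul1r.
Qed.

Lemma RatC0 : RatC act 0.
Proof. by exists [::] => f; rewrite big_nil act0m. Qed.

Lemma RatC_add a b : RatC act a -> RatC act b -> RatC act (a + b).
Proof.
case: hm => _ H2 _ _.
move=> [sa Ha] [sb Hb]; exists (sa ++ sb) => f.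
by rewrite H2 Ha Hb big_cat.
Qed.

Lemma RatC_sum (s : seq G) (n : G -> M) :
  RatC act (\sum_(sg <- s) act (n sg) (vdelta R sg)).
Proof.
elim: s => [|b s IH]; first by rewrite big_nil; exact: RatC0.
by rewrite big_cons; apply: RatC_add => //; exact: RatC_v.
Qed.

Lemma RatC_form m : RatC act m ->
  exists S : seq G, m = \sum_(sg <- S) act m (vdelta R sg).
Proof.
case: hm => _ _ _ H4.
case=> s Hs; exists (undup (map (fun x => x.2) s)).
rewrite -act_sum_f -{1}(H4 m) !Hs.
apply: eq_big_seq => x xin; congr act; congr embR; congr (_ * _).
rewrite /vdelta sum_pred1 ?undup_uniq // mem_undup.
by rewrite (map_f (fun x => x.2) xin).
Qed.

Lemma direct (s : seq G) (n : G -> M) : uniq s ->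
  \sum_(sg <- s) act (n sg) (vdelta R sg) = 0 ->
  forall sg, sg \in s -> act (n sg) (vdelta R sg) = 0.
Proof.
case: hm => _ _ H3 _.
move=> us h0 sg ins.
have := congr1 (fun y => act y (vdelta R sg)) h0; rewrite /= act0m act_sum_m.
under eq_bigr => s' _ do rewrite H3 mapmul_v.
have E : forall s', act (n s') (fun tau => if s' == tau then vdelta R sg tau else 0)
   = if s' == sg then act (n s') (vdelta R sg) else 0.
  move=> s'; case: (s' =P sg) => [->|ne].
    congr act; apply: functional_extensionality => t.
    by rewrite /vdelta; case: eqP.
  rewrite -(actm0 (n s')); congr act; apply: functional_extensionality => t.
  rewrite /vdelta; case: (s' =P t) => // <-.
  by case: eqP => // E'; case: ne.
under eq_bigr => s' _ do rewrite E.
by rewrite sum_pred1 // ins.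
Qed.

Lemma shift (sg rho : G) (m : M) (r : R) : comp rho r = r ->
  exists n : M, act (act m (vdelta R sg)) (@embR G k R r)
                = act n (vdelta R (sg * rho)%g).
Proof.
case: hm => _ _ H3 _ => hr.
set g := fun tau => if sg == tau then r else 0.
exists (act m g); rewrite !H3 mapmul_v; congr act.
apply: functional_extensionality => tau; rewrite /mapmul /g /embR.
case: (sg =P tau) => [<-|_].
  by rewrite (homog_mul _ hr) /vdelta eqxx mulr1.
by rewrite (homog_mul _ (comp0 1%g)) mul0r.
Qed.

End Mod.
End S.

Theorem mainTheorem10 (G : groupType) (k : comPzRingType) (R : algType k)
    (comp : G -> R -> R) (supp : R -> seq G) :
  is_grading comp supp ->
  (forall (M : zmodType) (act : M -> (G -> R) -> M),
    is_rmodule comp supp act ->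
    [/\ (* Rat^C(M) = sum_sigma M.v_sigma *)
        (forall m : M, RatC act m <->
           exists (s : seq G) (n : G -> M), m = \sum_(sigma <- s) act (n sigma) (vdelta R sigma)),
        (* the sum is direct *)
        (forall (s : seq G) (n : G -> M), uniq s ->
           \sum_(sigma <- s) act (n sigma) (vdelta R sigma) = 0 ->
           forall sigma, sigma \in s -> act (n sigma) (vdelta R sigma) = 0) &
        (* (M.v_sigma) R_rho is contained in M.v_{sigma rho} *)
        (forall (sigma rho : G) (m : M) (r : R), comp rho r = r ->
           exists n : M, act (act m (vdelta R sigma)) (@embR G k R r)
                         = act n (vdelta R (sigma * rho)%g))]) /\
  (* Rat^C is exact *)
  (forall (M N P : zmodType) (actM : M -> (G -> R) -> M) (actN : N -> (G -> R) -> N)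
          (actP : P -> (G -> R) -> P) (f : M -> N) (g : N -> P),
     is_rmodule comp supp actM -> is_rmodule comp supp actN -> is_rmodule comp supp actP ->
     is_rmod_morph actM actN f -> is_rmod_morph actN actP g ->
     (forall n : N, g n = 0 <-> exists m : M, f m = n) ->
     forall n : N, RatC actN n -> g n = 0 -> exists m : M, RatC actM m /\ f m = n).
Proof.
move=> gr; split.
  move=> M act hm; split.
  - move=> m; split.
      case/(RatC_form hm) => S ->.
      by exists S, (fun _ => m).
    by case=> s [n ->]; exact: (RatC_sum gr hm).
  - exact: (direct gr hm).
  - exact: (shift gr hm).
move=> M N P actM actN actP f g hM hN hP [fD fA] _ Hex n rn gn.
case: (proj1 (Hex n) gn) => m0 fm0.
case: (RatC_form hN rn) => S eS.
exists (\sum_(sg <- S) actM m0 (vdelta R sg)); split; first exact: (RatC_sum gr hM).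
have f0 : f 0 = 0.
  have h := fD 0 0; rewrite addr0 in h.
  by apply: (addrI (f 0)); rewrite addr0 -h.
have fS : forall (s : seq G) (F : G -> M), f (\sum_(i <- s) F i) = \sum_(i <- s) f (F i).
  move=> s F; elim: s => [|b s IH]; first by rewrite !big_nil.
  by rewrite !big_cons fD IH.
rewrite fS {1}eS; apply: eq_bigr => sg _.
by rewrite fA fm0.
Qed.
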